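(* Let $d\ge 1$, $n\ge 1$, $r\ge 0$ be integers and let $N$ be a polynomial (with complex coefficients) in the components of $u\in\mathbb{C}^n$ and of all its spatial partial derivatives $D^\alpha u$, $|\alpha|\le r$, $x\in\mathbb{T}^d$. Let $s>s_0=d+r$ and $C>0$. Suppose $a=(a_k)_{k\in\mathbb{Z}^d}$, $a_k\in\mathbb{C}^n$, satisfies $|a_k|\le C/|k|^s$ for $k\neq 0$ and $|a_0|\le C$. Then the formal series defining $N_k(a)$, $\frac{\partial N_k}{\partial a_j}(a)$ and $\frac{\partial^2 N_k}{\partial a_{j_1}\partial a_{j_2}}(a)$ (for all $k,j,j_1,j_2\in\mathbb{Z}^d$) are absolutely convergent, and there exist constants $D=D(C,s)$, $D_1=D_1(C,s)$, $D_2=D_2(C,s)$ (depending also on the fixed $N$, $d$, $r$) such that for all $k,j,j_1,j_2\in\mathbb{Z}^d$: $$|N_k|\le \frac{D}{|k|^{s-r}}\ (k\neq 0),\qquad |N_0|\le D,$$ $$\left|\frac{\partial N_k}{\partial a_j}\right|\le \frac{D_1|j|^r}{|k-j|^{s-r}}\ (k\neq j),\qquad \left|\frac{\partial N_k}{\partial a_j}\right|\le D_1|j|^r\ (k=j),$$ $$\left|\frac{\partial^2 N_k}{\partial a_{j_1}\partial a_{j_2}}\right|\le \frac{D_2|j_1|^r|j_2|^r}{|k-j_1-j_2|^{s-r}}\ (k\neq j_1+j_2),\qquad \left|\frac{\partial^2 N_k}{\partial a_{j_1}\partial a_{j_2}}\right|\le D_2|j_1|^r|j_2|^r\ (k=j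_1+j_2).$$
   Context: $\mathbb{T}^d=(\mathbb{R}\bmod 2\pi)^d$. On $\mathbb{Z}^d$ a norm $|\cdot|$ is fixed satisfying $|(k_1,\dots,k_d)|\ge |k_j|$ for each $j$; by convention $|0|$ is redefined to be $1$ in these estimates. For $\alpha\in\mathbb{N}^d$, $D^\alpha$ denotes the partial derivative $\partial^{|\alpha|}/\partial x_1^{\alpha_1}\cdots\partial x_d^{\alpha_d}$, $|\alpha|=\sum\alpha_i$, and $k^\alpha=k_1^{\alpha_1}\cdots k_d^{\alpha_d}$. To a sequence $a=(a_k)$ associate the formal series $u=\sum_k a_k e^{\mathrm{i}k\cdot x}$, so $D^\alpha u$ has formal Fourier coefficients $\mathrm{i}^{|\alpha|}k^\alpha a_k$. $N_k(a)$ is the formal $k$-th Fourier coefficient of $N(u,Du,\dots,D^ru)$, obtained by expanding each monomial of $N$ as a convolution sum $\sum_{k_1+\dots+k_l=k} v_{k_1}\cdots v_{k_l}$ where each $v_{k_i}$ is a Fourier coefficient of a component of $u$ or of one of its derivatives of order $\le r$. The symbols for derivatives are the formal series $$\frac{\partial N_k}{\partial a_j}=\sum_{|\alpha|\le r}\Big(\frac{\partial N}{\partial(D^\alpha u)}(u,\dots,D^ru)\Big)_{k-j}\mathrm{i}^{|\alpha|}j^\alpha,$$ $$\frac{\partial^2 N_k}{\partial a_{j_1}\partial a_{j_2}}=\sum_{|\alpha_1|,|\alpha_2|\le r}\Big(\frac{\partial^2 N}{\partial(D^{\alpha_1}u)\partial(D^{\alpha_2}u)}(u,\dots,D^ru)\Big)_{k-j_1-j_2}\mathrm{i}^{|\alpha_1|+|\alpha_2|}j_1^{\alpha_1}j_2^{\alpha_2},$$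 where $\partial N/\partial(D^\alpha u)$ denotes the partial derivative of the polynomial $N$ with respect to the argument slot $D^\alpha u$, and $(\cdot)_m$ is the formal $m$-th Fourier coefficient (convolution expansion) of the resulting polynomial expression. *)

(* Defs.v *)
(* Complex numbers are R[i] for an
   arbitrary R : realType (mathcomp-real-closed 'complex'), given the
   topology/normed structure of a numClosedFieldType via the ^o alias. *)
From HB Require Import structures.
From mathcomp Require Import all_boot all_order all_algebra.
From mathcomp Require Import finmap.
From mathcomp Require Import all_classical all_reals all_analysis.
From mathcomp Require Import complex.
Import numFieldTopology.Exports numFieldNormedType.Exports.
Import Order.TTheory GRing.Theory Num.Theory.

Set Implicit Arguments.
Unset Strict Implicit.
Unset Printing Implicit Defensive.

Local Open Scope classical_set_scope.
Local Open Scope complex_scope.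
Local Open Scope ring_scope.

Definition Cpl (R : realType) := (R[i])^o.

Definition Zd (d : nat) := 'rV[int]_d.

Definition is_Zd_norm (R : realType) (d : nat) (nrm : Zd d -> R) : Prop :=
  [/\ forall k : Zd d, 0 <= nrm k,
      forall k : Zd d, nrm k = 0 -> k = 0,
      forall k l : Zd d, nrm (k + l) <= nrm k + nrm l,
      forall (m : int) (k : Zd d), nrm (m *: k) = (`|m|%:~R) * nrm k
    & forall (k : Zd d) (j : 'I_d), (`|k ord0 j|%:~R) <= nrm k].

(* The convention |0| := 1 used in the estimates. *)
Definition nrm1 (R : realType) (d : nat) (nrm : Zd d -> R) (k : Zd d) : R :=
  if k == 0 then 1 else nrm k.

(* Multi-indices alpha with entries <= r (the order constraint |alpha| <= r
   is imposed separately); |alpha| = sum of entries. *)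
Definition mindex (d r : nat) := {ffun 'I_d -> 'I_r.+1}.
Definition mdeg (d r : nat) (al : mindex d r) : nat := (\sum_(j < d) al j)%N.

Definition zpow (R : realType) (d r : nat) (k : Zd d) (al : mindex d r) : Cpl R :=
  \prod_(j < d) ((k ord0 j)%:~R) ^+ (al j).
Arguments zpow {R d r} k al.

(* A "slot" (i, alpha) stands for the i-th component of D^alpha u. *)
Definition slot (n d r : nat) := ('I_n * mindex d r)%type.

(* A polynomial N (complex coefficients) in the slots, given as a finite list
   of monomials  c * v_1 * ... * v_l  (c, [:: v_1; ...; v_l]). *)
Definition cpoly (R : realType) (n d r : nat) := seq (Cpl R * seq (slot n d r)).

Definition order_le (R : realType) (n d r : nat) (P : cpoly R n d r) : Prop :=
  forall m, m \in P -> forall v, v \in m.2 -> (mdeg v.2 <= r)%N.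

(* Partial derivative of a polynomial with respect to the slot v
   (product rule: remove one occurrence of v in each monomial, in all ways). *)
Definition rem_at (T : Type) (p : nat) (s : seq T) : seq T :=
  take p s ++ drop p.+1 s.

Definition pderiv (R : realType) (n d r : nat) (v : slot n d r)
  (P : cpoly R n d r) : cpoly R n d r :=
  flatten [seq [seq (m.1, rem_at p m.2) | p <- iota 0 (size m.2) &
                     nth v m.2 p == v] | m <- P].

(* Formal Fourier coefficient of the slot v = (i, alpha), i.e. of D^alpha u_i,
   at q, for u = sum_k a_k e^{ik.x}:  i^{|alpha|} q^alpha (a_q)_i. *)
Definition vcoef (R : realType) (n d r : nat) (a : Zd d -> 'I_n -> Cpl R)
  (v : slot n d r) (q : Zd d) : Cpl R :=
  'i ^+ mdeg v.2 * zpow q v.2 * a q v.1.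

(* The family of terms of the convolution sum of the monomial v_1 ... v_l at k:
   indexed by sequences (k_1, ..., k_l) of Z^d; the terms with
   k_1 + ... + k_l <> k (or wrong length) are 0. *)
Definition mono_fam (R : realType) (n d r : nat) (a : Zd d -> 'I_n -> Cpl R)
  (vs : seq (slot n d r)) (k : Zd d) : seq (Zd d) -> Cpl R :=
  fun t => if (size t == size vs) && (\sum_(q <- t) q == k)
           then \prod_(x <- zip vs t) vcoef a x.1 x.2 else 0.

Definition totally {I : choiceType} : set_system {fset I} :=
  filter_from setT (fun A => [set B | (A `<=` B)%fset]).

Definition abs_summable (R : realType) (I : choiceType) (f : I -> Cpl R) : Prop :=
  exists M : R, forall J : {fset I}, \sum_(i <- J) `|f i| <= M%:C.

Definition usum (R : realType) (I : choiceType) (f : I -> Cpl R) : Cpl R :=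
  lim ((fun J : {fset I} => \sum_(i <- J) f i) @ totally).

(* The formal k-th Fourier coefficient of P(u, Du, ..., D^r u). *)
Definition Fc (R : realType) (n d r : nat) (a : Zd d -> 'I_n -> Cpl R)
  (P : cpoly R n d r) (k : Zd d) : Cpl R :=
  \sum_(m <- P) m.1 * usum (mono_fam a m.2 k).

Definition Fc_abs (R : realType) (n d r : nat) (a : Zd d -> 'I_n -> Cpl R)
  (P : cpoly R n d r) (k : Zd d) : Prop :=
  forall m, m \in P -> abs_summable (mono_fam a m.2 k).

Definition dN (R : realType) (n d r : nat) (a : Zd d -> 'I_n -> Cpl R)
  (P : cpoly R n d r) (k j : Zd d) (i : 'I_n) : Cpl R :=
  \sum_(al : mindex d r | (mdeg al <= r)%N)
     Fc a (pderiv (i, al) P) (k - j) * 'i ^+ mdeg al * zpow j al.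

Definition d2N (R : realType) (n d r : nat) (a : Zd d -> 'I_n -> Cpl R)
  (P : cpoly R n d r) (k j1 j2 : Zd d) (i1 i2 : 'I_n) : Cpl R :=
  \sum_(al1 : mindex d r | (mdeg al1 <= r)%N)
  \sum_(al2 : mindex d r | (mdeg al2 <= r)%N)
     Fc a (pderiv (i2, al2) (pderiv (i1, al1) P)) (k - j1 - j2)
       * 'i ^+ (mdeg al1 + mdeg al2) * zpow j1 al1 * zpow j2 al2.

(* Main.v *)
Require Import Defs.
From HB Require Import structures.
From mathcomp Require Import all_boot all_order all_algebra.
From mathcomp Require Import finmap.
From mathcomp Require Import all_classical all_reals all_analysis.
From mathcomp Require Import complex.
From mathcomp Require Import ring lra.
Import numFieldTopology.Exports numFieldNormedType.Exports.
Import Order.TTheory GRing.Theory Num.Theory.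
Local Open Scope classical_set_scope.
Local Open Scope complex_scope.
Local Open Scope ring_scope.
Set Implicit Arguments.
Unset Strict Implicit.
Unset Printing Implicit Defensive.

Lemma sum_sub_le {R : numDomainType} {T : eqType} (s1 s2 : seq T) (F : T -> R) :
  uniq s1 -> uniq s2 -> {subset s1 <= s2} -> (forall x, 0 <= F x) ->
  \sum_(x <- s1) F x <= \sum_(x <- s2) F x.
Proof.
move=> u1 u2 sub F0.
rewrite [X in _ <= X](bigID (fun x => x \in s1)) /=.
have -> : \sum_(x <- s2 | x \in s1) F x = \sum_(x <- s1) F x.
  rewrite -big_filter; apply: perm_big; apply: uniq_perm.
  - exact: filter_uniq.
  - exact: u1.
  - move=> x; rewrite mem_filter; apply/andP/idP => [[]//|h]; split => //; exact: sub.
by rewrite lerDl; apply: sumr_ge0 => x _; exact: F0.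
Qed.

Lemma fsum_le_sub {R : numDomainType} (I : choiceType) (p : I -> R) (A B : {fset I}) :
  (forall i, 0 <= p i) -> (A `<=` B)%fset -> \sum_(i <- A) p i <= \sum_(i <- B) p i.
Proof.
move=> p0 /fsubsetP AB; apply: sum_sub_le => //; exact: fset_uniq.
Qed.

Instance totally_filter' {I : choiceType} : ProperFilter (@totally I).
Proof.
eapply filter_from_proper; last by move=> A _; exists A; rewrite /= fsubset_refl.
apply: filter_fromT_filter; first by exists fset0.
by move=> A B /=; exists (A `|` B)%fset => P /=; rewrite fsubUset => /andP[].
Qed.

Lemma net_nonneg {R : realType} (I : choiceType) (p : I -> R) (M : R) :
  (forall i, 0 <= p i) -> (forall J : {fset I}, \sum_(i <- J) p i <= M) ->
  exists L, [/\ 0 <= L, L <= M & forall e, 0 < e -> exists A : {fset I},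
    forall B, (A `<=` B)%fset -> `|\sum_(i <- B) p i - L| < e].
Proof.
move=> p0 pM.
pose E := [set x | exists J : {fset I}, x = \sum_(i <- J) p i].
have E0 : E 0 by exists fset0; rewrite big_seq_fset0.
have hE : has_sup E.
  split; first by exists 0.
  by exists M => x [J ->].
exists (sup E); split.
- exact: sup_upper_bound.
- by apply: ge_sup; [exists 0 | move=> x [J ->]].
- move=> e e0; have [x [A ->] hx] := sup_adherent e0 hE.
  exists A => B AB.
  have h1 : \sum_(i <- A) p i <= \sum_(i <- B) p i by exact: fsum_le_sub.
  have h2 : \sum_(i <- B) p i <= sup E by apply: sup_upper_bound => //; exists B.
  rewrite distrC ger0_norm ?subr_ge0 //.
  rewrite ltrBlDr -ltrBlDl; apply: lt_le_trans hx _; exact: h1.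
Qed.

Section cplx.
Variable R : realType.

Lemma rC_add (x y : R) : (x + y)%:C = x%:C + y%:C :> R[i].
Proof. by simpc. Qed.
Lemma rC_opp (x : R) : (- x)%:C = - x%:C :> R[i].
Proof. by simpc. Qed.
Lemma rC_mul (x y : R) : (x * y)%:C = x%:C * y%:C :> R[i].
Proof. by simpc. Qed.
Lemma rC_sum (I : Type) (s : seq I) (P : pred I) (F : I -> R) :
  (\sum_(i <- s | P i) F i)%:C = \sum_(i <- s | P i) (F i)%:C :> R[i].
Proof.
elim: s => [|x s IH]; first by rewrite !big_nil.
by rewrite !big_cons; case: (P x) => //; rewrite rC_add IH.
Qed.
Lemma rC_prod (I : Type) (s : seq I) (F : I -> R) :
  (\prod_(i <- s) F i)%:C = \prod_(i <- s) (F i)%:C :> R[i].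
Proof.
elim: s => [|x s IH]; first by rewrite !big_nil.
by rewrite !big_cons rC_mul IH.
Qed.
Lemma rC_norm (x : R) : `|x%:C| = `|x|%:C :> R[i].
Proof. by rewrite normc_def /= expr0n /= addr0 sqrtr_sqr. Qed.
Lemma rC_le (x y : R) : (x%:C <= y%:C :> R[i]) = (x <= y).
Proof. exact: lecR. Qed.
Lemma rC_lt (x y : R) : (x%:C < y%:C :> R[i]) = (x < y).
Proof. exact: ltcR. Qed.
Lemma normC_i : `|'i%C| = 1 :> R[i].
Proof. by rewrite normc_def /= expr0n /= add0r expr1n sqrtr1. Qed.

Definition nfc (z : R[i]) : R := Num.sqrt (complex.Re z ^+ 2 + complex.Im z ^+ 2).
Lemma nfcE (z : R[i]) : `|z| = (nfc z)%:C.
Proof. exact: normc_def. Qed.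
Lemma nfc_ge0 z : 0 <= nfc z. Proof. exact: sqrtr_ge0. Qed.
Lemma nfc_Re z : `|complex.Re z| <= nfc z.
Proof.
rewrite /nfc -sqrtr_sqr ler_sqrt ?addr_ge0 ?sqr_ge0 // lerDl sqr_ge0 //.
Qed.
Lemma nfc_Im z : `|complex.Im z| <= nfc z.
Proof.
rewrite /nfc -sqrtr_sqr ler_sqrt ?addr_ge0 ?sqr_ge0 // lerDr sqr_ge0 //.
Qed.

Definition pp (x : R) := if 0 <= x then x else 0.
Lemma pp_ge0 x : 0 <= pp x. Proof. by rewrite /pp; case: ifP. Qed.
Lemma pp_le x : pp x <= `|x|.
Proof. by rewrite /pp; case: ifP => h; [rewrite ger0_norm | rewrite normr_ge0]. Qed.
Lemma ppE x : pp x - pp (- x) = x.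
Proof.
rewrite /pp oppr_ge0; case: (leP 0 x) => h; case: ifP => h2.
- have x0 : x = 0 by apply/eqP; rewrite eq_le h h2.
  by rewrite x0 oppr0 subr0.
- by rewrite subr0.
- by rewrite sub0r opprK.
- by rewrite ltW in h2.
Qed.

Lemma cplx_decomp (z : R[i]) :
  z = (pp (complex.Re z) - pp (- complex.Re z))%:C
      + 'i%C * (pp (complex.Im z) - pp (- complex.Im z))%:C.
Proof. by rewrite !ppE {1}[z]complexE. Qed.


Lemma usum_bound (I : choiceType) (f : I -> Cpl R) (M : R) :
  (forall J : {fset I}, \sum_(i <- J) `|f i| <= M%:C) ->
  `|usum f| <= (4 * M)%:C.
Proof.
move=> hM.
have hM' : forall J : {fset I}, \sum_(i <- J) nfc (f i) <= M.
  move=> J; rewrite -rC_le rC_sum; under eq_bigr do rewrite -nfcE; exact: hM J.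
have bnd : forall (q : I -> R), (forall i, q i <= nfc (f i)) -> (forall i, 0 <= q i) ->
    forall J : {fset I}, \sum_(i <- J) q i <= M.
  move=> q hq q0 J; apply: le_trans (hM' J); apply: ler_sum => i _; exact: hq.
pose p1 i := pp (complex.Re (f i)); pose p2 i := pp (- complex.Re (f i)).
pose p3 i := pp (complex.Im (f i)); pose p4 i := pp (- complex.Im (f i)).
have [L1 [L10 L1M cv1]] : exists L, [/\ 0 <= L, L <= M & forall e, 0 < e -> exists A : {fset I},
    forall B, (A `<=` B)%fset -> `|\sum_(i <- B) p1 i - L| < e].
  apply: net_nonneg => [i|]; first exact: pp_ge0.
  apply: bnd => i; last exact: pp_ge0.
  by apply: le_trans (pp_le _) _; rewrite ?normrN; apply: nfc_Re.
have [L2 [L20 L2M cv2]] : exists L, [/\ 0 <= L, L <= M & forall e, 0 < e -> exists A : {fset I},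
    forall B, (A `<=` B)%fset -> `|\sum_(i <- B) p2 i - L| < e].
  apply: net_nonneg => [i|]; first exact: pp_ge0.
  apply: bnd => i; last exact: pp_ge0.
  by apply: le_trans (pp_le _) _; rewrite ?normrN; apply: nfc_Re.
have [L3 [L30 L3M cv3]] : exists L, [/\ 0 <= L, L <= M & forall e, 0 < e -> exists A : {fset I},
    forall B, (A `<=` B)%fset -> `|\sum_(i <- B) p3 i - L| < e].
  apply: net_nonneg => [i|]; first exact: pp_ge0.
  apply: bnd => i; last exact: pp_ge0.
  by apply: le_trans (pp_le _) _; rewrite ?normrN; apply: nfc_Im.
have [L4 [L40 L4M cv4]] : exists L, [/\ 0 <= L, L <= M & forall e, 0 < e -> exists A : {fset I},
    forall B, (A `<=` B)%fset -> `|\sum_(i <- B) p4 i - L| < e].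
  apply: net_nonneg => [i|]; first exact: pp_ge0.
  apply: bnd => i; last exact: pp_ge0.
  by apply: le_trans (pp_le _) _; rewrite ?normrN; apply: nfc_Im.
pose Lf : R[i] := (L1 - L2)%:C + 'i%C * (L3 - L4)%:C.
have partial : forall B : {fset I}, \sum_(i <- B) f i =
    (\sum_(i <- B) p1 i - \sum_(i <- B) p2 i)%:C
    + 'i%C * (\sum_(i <- B) p3 i - \sum_(i <- B) p4 i)%:C.
  move=> B; rewrite (eq_bigr _ (fun i _ => cplx_decomp (f i))) big_split /=.
  by rewrite -mulr_sumr -!rC_sum !sumrB.
have cv : (fun J => \sum_(i <- J) f i) @ totally --> (Lf : Cpl R).
  apply/cvgrPdist_lt => eps eps0.
  move: (eps0); rewrite ltcE /= => /andP[/eqP epsI epsR].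
  have e0 : 0 < complex.Re eps / 4 by rewrite divr_gt0.
  have [A1 h1] := cv1 _ e0; have [A2 h2] := cv2 _ e0.
  have [A3 h3] := cv3 _ e0; have [A4 h4] := cv4 _ e0.
  exists (A1 `|` A2 `|` A3 `|` A4)%fset => // B /= hB.
  rewrite !fsubUset in hB; case/andP: hB => /andP[] /andP[] hB1 hB2 hB3 hB4.
  rewrite partial.
  set s1 := \sum_(i <- B) p1 i; set s2 := \sum_(i <- B) p2 i.
  set s3 := \sum_(i <- B) p3 i; set s4 := \sum_(i <- B) p4 i.
  have -> : Lf - ((s1 - s2)%:C + 'i%C * (s3 - s4)%:C) =
     ((s1 - L1)%:C * (-1) + (s2 - L2)%:C) + 'i%C * ((s3 - L3)%:C * (-1) + (s4 - L4)%:C).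
    rewrite /Lf !rC_add !rC_opp; ring.
  have -> : eps = (complex.Re eps)%:C.
    by apply/eqP; rewrite eq_complex /= epsI !eqxx.
  apply: (@le_lt_trans _ _ ((`|s1 - L1| + `|s2 - L2| + (`|s3 - L3| + `|s4 - L4|))%:C)).
    apply: le_trans (ler_normD _ _) _; rewrite [X in _ <= X]rC_add.
    apply: lerD.
      apply: le_trans (ler_normD _ _) _.
      by rewrite normrM normrN1 mulr1 !rC_norm [X in _ <= X]rC_add.
    rewrite normrM normC_i mul1r.
    apply: le_trans (ler_normD _ _) _.
    by rewrite normrM normrN1 mulr1 !rC_norm [X in _ <= X]rC_add.
  rewrite rC_lt.
  have := h1 B hB1; have := h2 B hB2; have := h3 B hB3; have := h4 B hB4.
  rewrite -/s1 -/s2 -/s3 -/s4; lra.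
rewrite /usum (cvg_lim (@norm_hausdorff _ _) cv) /Lf.
apply: le_trans (ler_normD _ _) _; rewrite normrM normC_i mul1r !rC_norm -rC_add rC_le.
have -> : 4 * M = (M + M) + (M + M) by ring.
apply: lerD; apply: le_trans (ler_normB _ _) _; rewrite !ger0_norm //; exact: lerD.
Qed.

End cplx.

Section oneD.
Variable R : realType.
Variable tau : R.
Hypothesis htau : 1 < tau.

Definition hh (m : nat) : R := ((m.+1%:R) `^ tau)^-1.

Lemma tau_ge0 : 0 <= tau. Proof. by apply: le_trans (ltW htau). Qed.

Lemma hh_ge0 m : 0 <= hh m. Proof. by rewrite invr_ge0 powR_ge0. Qed.

Lemma pow2tau k : ((2 ^ k)%:R : R) `^ tau = (2 `^ tau) ^+ k.
Proof.
rewrite natrX -powR_mulrn ?ler0n // powRAC powR_mulrn //; exact: powR_ge0.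
Qed.

Definition rho : R := 2 / 2 `^ tau.

Lemma two_tau_gt2 : 2 < (2 : R) `^ tau.
Proof.
have -> : tau = 1 + (tau - 1) by ring.
rewrite powRD; last by apply/implyP => _; rewrite pnatr_eq0.
rewrite powRr1 ?ler0n // -[X in X < _]mulr1 ltr_pM2l ?ltr0n //.
have h1 : (1 : R) `^ (tau - 1) = 1 by rewrite powR1.
rewrite -[X in X < _]h1; apply: gt0_ltr_powR; rewrite ?subr_gt0 ?inE ?ler01 ?ler0n ?ltr1n //; by rewrite nnegrE ?ler01 ?ler0n.
Qed.

Lemma rho_ge0 : 0 <= rho.
Proof. by rewrite /rho divr_ge0 ?ler0n ?powR_ge0. Qed.
Lemma rho_lt1 : rho < 1.
Proof.
have h := two_tau_gt2; have hp : 0 < (2 : R) `^ tau by apply: lt_trans h.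
by rewrite /rho ltr_pdivrMr // mul1r.
Qed.

Lemma hh_block k : \sum_(2 ^ k <= m < 2 ^ k.+1) hh m <= rho ^+ k.
Proof.
have hp : 0 < (2 : R) `^ tau by apply: lt_trans two_tau_gt2.
apply: (@le_trans _ _ (\sum_(2 ^ k <= m < 2 ^ k.+1) (((2 ^ k)%:R : R) `^ tau)^-1)).
  rewrite big_nat_cond [X in _ <= X]big_nat_cond; apply: ler_sum => m /andP[/andP[h1 _] _].
  rewrite /hh lef_pV2 ?posrE ?powR_gt0 ?ltr0n ?expn_gt0 //.
  rewrite ge0_ler_powR ?tau_ge0 ?nnegrE ?ler0n // ler_nat; exact: leqW.
rewrite sumr_const_nat pow2tau /rho expnS mul2n -addnn addnK.
by rewrite exprMn exprVn -natrX mulr_natl.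
Qed.

Lemma geom_bound K : \sum_(k < K) rho ^+ k <= (1 - rho)^-1.
Proof.
have h1 : 0 < 1 - rho by rewrite subr_gt0 rho_lt1.
have e : (1 - rho) * \sum_(k < K) rho ^+ k = 1 - rho ^+ K.
  elim: K => [|K IH]; first by rewrite big_ord0 expr0 mulr0 subrr.
  by rewrite big_ord_recr /= mulrDr IH exprS; ring.
rewrite -(ler_pM2l h1) e mulfV ?gt_eqF // lerBlDr lerDl exprn_ge0 //; exact: rho_ge0.
Qed.

Definition Zb : R := 1 + (1 - rho)^-1.

Lemma hh_dyadic K : \sum_(0 <= m < 2 ^ K) hh m <= 1 + \sum_(k < K) rho ^+ k.
Proof.
elim: K => [|K IH].
  by rewrite expn0 big_nat1 big_ord0 /hh powR1 invr1 addr0.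
rewrite (@big_cat_nat _ _ _ (2 ^ K)) //=; last by rewrite leq_pexp2l.
rewrite big_ord_recr /= addrA; apply: lerD => //; exact: hh_block.
Qed.

Lemma hh_sumN N : \sum_(0 <= m < N) hh m <= Zb.
Proof.
apply: (@le_trans _ _ (\sum_(0 <= m < 2 ^ N) hh m)).
  rewrite (@big_cat_nat _ _ _ N _ (2 ^ N)) //=; last exact: ltnW (ltn_expl _ _).
  by rewrite lerDl sumr_ge0 // => m _; exact: hh_ge0.
apply: le_trans (hh_dyadic N) _; rewrite lerD2l; exact: geom_bound.
Qed.

Lemma hh_uniq (s : seq nat) : uniq s -> \sum_(m <- s) hh m <= Zb.
Proof.
move=> us; set N := (\max_(m <- s) m).+1.
apply: le_trans (hh_sumN N).
rewrite /index_iota subn0; apply: sum_sub_le => //; first exact: iota_uniq.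
  move=> m ms; rewrite mem_iota /= add0n ltnS; exact: (@leq_bigmax_seq _ _ xpredT (fun m => m) m ms).
exact: hh_ge0.
Qed.

Lemma hh_int_uniq (s : seq int) : uniq s -> \sum_(z <- s) hh `|z|%N <= Zb + Zb.
Proof.
move=> us; rewrite (bigID (fun z : int => 0 <= z)) /=; apply: lerD.
  rewrite -big_filter -(big_map (fun z : int => `|z|%N) xpredT hh).
  apply: hh_uniq; rewrite map_inj_in_uniq ?filter_uniq //.
  move=> x y; rewrite !mem_filter => /andP[x0 _] /andP[y0 _] e.
  by rewrite -(gez0_abs x0) -(gez0_abs y0) e.
rewrite -big_filter -(big_map (fun z : int => `|z|%N) xpredT hh).
apply: hh_uniq; rewrite map_inj_in_uniq ?filter_uniq //.
move=> x y; rewrite !mem_filter => /andP[x0 _] /andP[y0 _] e.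
rewrite -ltNge in x0; rewrite -ltNge in y0.
by rewrite -(opprK x) -(opprK y) -(ltz0_abs x0) -(ltz0_abs y0) e.
Qed.

End oneD.

Lemma prod_box_bound (R : realType) (d : nat) (G : 'I_d -> int -> R) (B : R) :
  0 <= B -> (forall j z, 0 <= G j z) ->
  (forall j (s : seq int), uniq s -> \sum_(z <- s) G j z <= B) ->
  forall H : seq (Zd d), uniq H ->
  \sum_(q <- H) \prod_(j < d) G j (q ord0 j) <= B ^+ d.
Proof.
move=> B0 G0 GB H uH.
set L := undup (flatten [seq [seq (q : 'rV[int]_d) ord0 j | j <- enum 'I_d] | q : Zd d <- H]).
set n := size L.
have uL : uniq L by exact: undup_uniq.
pose phi (f : {ffun 'I_d -> 'I_n}) : Zd d := \row_j nth 0 L (f j).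
have phi_inj : injective phi.
  move=> f g e; apply/ffunP => j.
  have := congr1 (fun m : Zd d => m ord0 j) e; rewrite /phi !mxE => e2.
  apply: val_inj => /=; apply/eqP.
  by rewrite -(nth_uniq 0 (ltn_ord (f j)) (ltn_ord (g j)) uL); apply/eqP.
have sub : {subset H <= map phi (index_enum {ffun 'I_d -> 'I_n})}.
  move=> q qH.
  have hq : forall j, (index (q ord0 j) L < n)%N.
    move=> j; rewrite index_mem mem_undup; apply/flatten_mapP; exists q => //.
    by apply: map_f; rewrite mem_enum.
  have -> : q = phi [ffun j => Ordinal (hq j)].
    apply/matrixP => i j; rewrite ord1 /phi mxE ffunE /= nth_index //.
    by rewrite -index_mem; exact: hq.
  by apply: map_f; rewrite mem_index_enum.
apply: (le_trans (sum_sub_le uH _ sub _)).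
- by rewrite map_inj_uniq // index_enum_uniq.
- by move=> q; apply: prodr_ge0 => j _; exact: G0.
rewrite big_map.
have -> : \sum_(f <- index_enum {ffun 'I_d -> 'I_n}) \prod_(j < d) G j (phi f ord0 j)
   = \sum_(f : {ffun 'I_d -> 'I_n}) \prod_(j < d) G j (nth 0 L (f j)).
  by apply: eq_bigr => f _; apply: eq_bigr => j _; rewrite /phi mxE.
rewrite -(bigA_distr_bigA (fun j (i : 'I_n) => G j (nth 0 L i))) /=.
rewrite -[in X in _ <= X](card_ord d) -prodr_const.
apply: ler_prod => j _; apply/andP; split.
  by apply: sumr_ge0 => i _; exact: G0.
have -> : \sum_(i < n) G j (nth 0 L i) = \sum_(z <- L) G j z.
  by rewrite (big_nth 0) big_mkord.
exact: GB.
Qed.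

Section weight.
Variables (R : realType) (d : nat) (nrm : Zd d -> R).
Hypothesis Hnrm : is_Zd_norm nrm.
Variable sig : R.
Hypothesis hd : (1 <= d)%N.
Hypothesis hsig : d%:R < sig.

Lemma nrm_ge0 q : 0 <= nrm q. Proof. by case: Hnrm. Qed.
Lemma nrmD k l : nrm (k + l) <= nrm k + nrm l. Proof. by case: Hnrm. Qed.
Lemma nrm_coord (q : Zd d) j : `|q ord0 j|%:~R <= nrm q. Proof. by case: Hnrm. Qed.
Lemma nrm0 : nrm 0 = 0.
Proof.
case: Hnrm => _ _ _ hs _; have := hs 0 0; rewrite scale0r => ->.
by rewrite normr0 mul0r.
Qed.
Lemma nrmN q : nrm (- q) = nrm q.
Proof.
case: Hnrm => _ _ _ hs _; have := hs (-1) q; rewrite scaleN1r => ->.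
by rewrite normrN1 mul1r.
Qed.
Lemma nrm_ge1 (q : Zd d) : q != 0 -> 1 <= nrm q.
Proof.
move=> q0; case: (pickP (fun j => q ord0 j != 0)) => [j hj | h].
  apply: le_trans (nrm_coord q j); rewrite ler1z -gtz0_ge1 normr_gt0 //.
case/eqP: q0; apply/matrixP => i j; rewrite ord1 mxE.
by move: (h j) => /negbFE /eqP.
Qed.

Lemma nrm1_ge1 q : 1 <= nrm1 nrm q.
Proof. by rewrite /nrm1; case: eqP => [_|/eqP h] //; exact: nrm_ge1. Qed.
Lemma nrm1_gt0 q : 0 < nrm1 nrm q.
Proof. exact: lt_le_trans ltr01 (nrm1_ge1 q). Qed.
Lemma nrm_le_nrm1 q : nrm q <= nrm1 nrm q.
Proof. by rewrite /nrm1; case: eqP => [->|] //; rewrite nrm0 ler01. Qed.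
Lemma coord_le_nrm1 (q : Zd d) j : `|q ord0 j|%:~R <= nrm1 nrm q.
Proof. exact: le_trans (nrm_coord q j) (nrm_le_nrm1 q). Qed.
Lemma nrm1_tri k q : nrm1 nrm k <= nrm1 nrm q + nrm1 nrm (k - q).
Proof.
have h1 := nrm1_ge1 q; have h2 := nrm1_ge1 (k - q).
rewrite {1}/nrm1; case: eqP => _; first lra.
apply: le_trans (_ : nrm q + nrm (k - q) <= _).
  by have := nrmD q (k - q); rewrite addrC subrK.
apply: lerD; exact: nrm_le_nrm1.
Qed.

Definition w q := (nrm1 nrm q `^ sig)^-1.
Lemma w_gt0 q : 0 < w q.
Proof. by rewrite invr_gt0 powR_gt0 // nrm1_gt0. Qed.
Lemma w_ge0 q : 0 <= w q. Proof. exact: ltW (w_gt0 q). Qed.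
Lemma w0 : w 0 = 1.
Proof. by rewrite /w /nrm1 eqxx powR1 invr1. Qed.

Lemma sig_ge0 : 0 <= sig.
Proof. by apply: le_trans (ltW hsig). Qed.

Lemma inv_pow_split (Y : R) : 0 < Y -> (Y `^ sig)^-1 = 2 `^ sig * (((2 * Y) `^ sig)^-1).
Proof.
move=> Y0; rewrite powRM ?ler0n ?(ltW Y0) // invfM mulrA divff ?mul1r //.
Qed.

Lemma w_le_of k q : nrm1 nrm k <= 2 * nrm1 nrm q -> w q <= 2 `^ sig * w k.
Proof.
move=> h; rewrite /w inv_pow_split ?nrm1_gt0 //.
rewrite ler_wpM2l ?powR_ge0 // lef_pV2 ?posrE ?powR_gt0 ?mulr_gt0 ?nrm1_gt0 //.
apply: ge0_ler_powR => //; first exact: sig_ge0.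
  by rewrite nnegrE; apply: ltW; exact: nrm1_gt0.
by rewrite nnegrE mulr_ge0 ?ler0n //; apply: ltW; exact: nrm1_gt0.
Qed.

Lemma w_conv_pt k q : w q * w (k - q) <= 2 `^ sig * w k * (w q + w (k - q)).
Proof.
have t := nrm1_tri k q.
have a0 := w_ge0 q; have b0 := w_ge0 (k - q).
have c0 : 0 <= 2 `^ sig * w k by rewrite mulr_ge0 ?powR_ge0 ?w_ge0.
case: (leP (nrm1 nrm (k - q)) (nrm1 nrm q)) => h.
  have : w q <= 2 `^ sig * w k by apply: w_le_of; lra.
  move: (2 `^ sig * w k) c0 => c c0 hc; nra.
have : w (k - q) <= 2 `^ sig * w k by apply: w_le_of; lra.
move: (2 `^ sig * w k) c0 => c c0 hc; nra.
Qed.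

Definition tau := sig / d%:R.
Lemma tau_gt1 : 1 < tau.
Proof.
have d0 : 0 < (d%:R : R) by rewrite ltr0n.
rewrite /tau ltr_pdivlMr // mul1r //.
Qed.

Lemma w_prod (q : Zd d) : w q <= 2 `^ sig * \prod_(j < d) hh tau `|q ord0 j|%N.
Proof.
rewrite /w /hh prodfV inv_pow_split ?nrm1_gt0 // ler_wpM2l ?powR_ge0 //.
set Y := nrm1 nrm q.
have Y1 : 1 <= Y by exact: nrm1_ge1.
have d0 : (d%:R : R) != 0 by rewrite pnatr_eq0 -lt0n.
rewrite lef_pV2 ?posrE ?powR_gt0 ?mulr_gt0 ?nrm1_gt0 //; last first.
  by apply: prodr_gt0 => j _; rewrite powR_gt0 // ltr0n.
have -> : sig = tau * d%:R by rewrite /tau divfK.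
rewrite powRrM powR_mulrn ?powR_ge0 //.
rewrite -[in X in _ <= X](card_ord d) -prodr_const.
apply: ler_prod => j _; rewrite powR_ge0 /=.
have t0 : 0 <= tau by apply: le_trans (ltW tau_gt1).
apply: ge0_ler_powR => //; rewrite ?nnegrE ?ler0n ?mulr_ge0 ?ler0n //.
  lra.
rewrite -addn1 natrD natr_absz.
have := coord_le_nrm1 q j; rewrite -/Y; lra.
Qed.

Definition Ssum := 2 `^ sig * (Zb tau + Zb tau) ^+ d.

Lemma Zb_ge0 : 0 <= Zb tau.
Proof.
rewrite /Zb addr_ge0 // invr_ge0 subr_ge0; apply: ltW; exact: rho_lt1 tau_gt1.
Qed.

Lemma w_sum (H : seq (Zd d)) : uniq H -> \sum_(q <- H) w q <= Ssum.
Proof.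
move=> uH.
apply: (@le_trans _ _ (\sum_(q <- H) 2 `^ sig * \prod_(j < d) hh tau `|q ord0 j|%N)).
  by apply: ler_sum => q _; exact: w_prod.
rewrite -mulr_sumr /Ssum ler_wpM2l ?powR_ge0 //.
apply: (prod_box_bound (G := fun _ z => hh tau `|z|%N)) => //.
- by rewrite addr_ge0 // Zb_ge0.
- by move=> _ z; exact: hh_ge0.
- move=> _ s us; exact: hh_int_uniq tau_gt1 s us.
Qed.

Lemma Ssum_ge0 : 0 <= Ssum.
Proof. by rewrite /Ssum mulr_ge0 ?powR_ge0 // exprn_ge0 // addr_ge0 // Zb_ge0. Qed.

Definition Kc := 2 `^ sig * (Ssum + Ssum).
Lemma Kc_ge0 : 0 <= Kc.
Proof. by rewrite /Kc mulr_ge0 ?powR_ge0 // addr_ge0 // Ssum_ge0. Qed.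

Lemma conv_bound k (H : seq (Zd d)) : uniq H ->
  \sum_(q <- H) w q * w (k - q) <= Kc * w k.
Proof.
move=> uH.
apply: (@le_trans _ _ (\sum_(q <- H) 2 `^ sig * w k * (w q + w (k - q)))).
  by apply: ler_sum => q _; exact: w_conv_pt.
rewrite -mulr_sumr big_split /=.
have h1 := w_sum uH.
have h2 : \sum_(q <- H) w (k - q) <= Ssum.
  rewrite -(big_map (fun q => k - q) xpredT w); apply: w_sum.
  by rewrite map_inj_uniq // => x y /addrI /oppr_inj.
have c0 : 0 <= 2 `^ sig * w k by rewrite mulr_ge0 ?powR_ge0 ?w_ge0.
have -> : Kc * w k = 2 `^ sig * w k * (Ssum + Ssum) by rewrite /Kc; ring.
rewrite ler_wpM2l //; exact: lerD.
Qed.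

End weight.

Fixpoint seqs (T : Type) (H : seq T) (l : nat) : seq (seq T) :=
  if l is l'.+1 then [seq q :: t | q <- H, t <- seqs H l'] else [:: [::]].

Lemma seqs_uniq (T : eqType) (H : seq T) l : uniq H -> uniq (seqs H l).
Proof.
move=> uH; elim: l => [|l IH] //=.
apply: allpairs_uniq => //; move=> [x1 y1] [x2 y2] _ _ /= [-> ->] //.
Qed.

Lemma mem_seqs (T : eqType) (H : seq T) (t : seq T) :
  {subset t <= H} -> t \in seqs H (size t).
Proof.
elim: t => [|q t IH] sub /=; first by rewrite inE.
apply: (allpairs_f (fun q t => q :: t)); first by apply: sub; rewrite inE eqxx.
by apply: IH => x xt; apply: sub; rewrite inE xt orbT.
Qed.

Section multi.
Variables (R : realType) (d : nat) (nrm : Zd d -> R).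
Hypothesis Hnrm : is_Zd_norm nrm.
Variable sig : R.
Hypothesis hd : (1 <= d)%N.
Hypothesis hsig : d%:R < sig.

Definition sumt (t : seq (Zd d)) : Zd d := \sum_(q <- t) q.

Lemma multi_conv (H : seq (Zd d)) l k : uniq H ->
  \sum_(t <- seqs H l | sumt t == k) \prod_(q <- t) w nrm sig q
    <= Kc d sig ^+ l * w nrm sig k.
Proof.
move=> uH; elim: l k => [|l IH] k /=.
  rewrite big_cons big_nil /sumt !big_nil expr0 mul1r.
  case: eqP => [<-|_]; first by rewrite addr0 w0.
  exact: w_ge0.
rewrite big_mkcond big_allpairs_dep /=.
apply: (@le_trans _ _ (\sum_(q <- H) w nrm sig q * (Kc d sig ^+ l * w nrm sig (k - q)))).
  apply: ler_sum => q _.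
  have -> : \sum_(t <- seqs H l) (if sumt (q :: t) == k then \prod_(q0 <- q :: t) w nrm sig q0 else 0)
      = w nrm sig q * \sum_(t <- seqs H l | sumt t == k - q) \prod_(q0 <- t) w nrm sig q0.
    rewrite mulr_sumr [in RHS]big_mkcond; apply: eq_bigr => t _.
    rewrite /sumt big_cons big_cons.
    have -> : (q + \sum_(j <- t) j == k) = (\sum_(j <- t) j == k - q).
      by apply/eqP/eqP => [<-|->]; [rewrite addrC addKr | rewrite addrC subrK].
    by case: ifP; rewrite ?mulr0.
  rewrite ler_wpM2l ?w_ge0 //; exact: IH.
under eq_bigr do rewrite mulrCA.
rewrite -mulr_sumr.
have -> : Kc d sig ^+ l.+1 * w nrm sig k = Kc d sig ^+ l * (Kc d sig * w nrm sig k) by rewrite exprS; ring.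
rewrite ler_wpM2l ?exprn_ge0 ?Kc_ge0 //.
exact: conv_bound.
Qed.

End multi.

Lemma order_le_pderiv (R : realType) n d r (v : slot n d r) (P : cpoly R n d r) :
  order_le P -> order_le (pderiv v P).
Proof.
move=> HP m /flatten_mapP [m' hm' /mapP [p _ ->]] x /=.
rewrite mem_cat => /orP [/mem_take|/mem_drop] hx; exact: HP m' hm' x hx.
Qed.

Section mainsec.
Variables (R : realType) (d n r : nat) (nrm : Zd d -> R).
Hypothesis Hnrm : is_Zd_norm nrm.
Variables (s C : R).
Hypothesis hd : (1 <= d)%N.
Hypothesis hs : (d + r)%:R < s.
Hypothesis hC : 0 < C.

Definition sg := s - r%:R.
Lemma hsg : d%:R < sg.
Proof. by move: hs; rewrite /sg natrD; lra. Qed.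

Local Notation ww := (w nrm sg).

Lemma rC_int (m : int) : (m%:~R : R)%:C = m%:~R :> R[i].
Proof. exact: rmorph_int. Qed.

Lemma zpow_bound (q : Zd d) (al : mindex d r) : (mdeg al <= r)%N ->
  `|zpow (R := R) q al| <= (nrm1 nrm q ^+ r)%:C.
Proof.
move=> hal.
have -> : zpow (R := R) q al = (\prod_(j < d) ((q ord0 j)%:~R : R) ^+ al j)%:C.
  rewrite rmorph_prod; apply: eq_bigr => j _; by rewrite rmorphXn rmorph_int.
rewrite rC_norm rC_le normr_prod.
apply: (@le_trans _ _ (\prod_(j < d) nrm1 nrm q ^+ al j)).
  apply: ler_prod => j _; rewrite normr_ge0 /= normrX lerXn2r ?nnegrE ?normr_ge0 //.
    exact: ltW (nrm1_gt0 Hnrm q).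
  by rewrite -intr_norm; exact: coord_le_nrm1.
rewrite prodrXr; apply: ler_weXn2l; first exact: nrm1_ge1.
exact: hal.
Qed.

Definition DP (P : cpoly R n d r) : R :=
  \sum_(m <- P) nfc m.1 * (4 * (C ^+ size m.2 * Kc d sg ^+ size m.2)).

Lemma DP_ge0 P : 0 <= DP P.
Proof.
apply: sumr_ge0 => m _; rewrite mulr_ge0 ?nfc_ge0 // mulr_ge0 ?ler0n //.
by rewrite mulr_ge0 ?exprn_ge0 ?(ltW hC) ?(Kc_ge0 hd hsg).
Qed.

Section withA.
Variable a : Zd d -> 'I_n -> Cpl R.
Hypothesis ha0 : forall i, `|a 0 i| <= C%:C.
Hypothesis hak : forall k i, k != 0 -> `|a k i| <= (C / nrm k `^ s)%:C.

Lemma a_bound q i : `|a q i| <= (C / nrm1 nrm q `^ s)%:C.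
Proof.
case: (eqVneq q 0) => [->|q0].
  by rewrite /nrm1 eqxx powR1 divr1; exact: ha0.
by rewrite /nrm1 (negbTE q0); exact: hak.
Qed.

Lemma vcoef_bound (v : slot n d r) q : (mdeg v.2 <= r)%N ->
  `|vcoef a v q| <= (C * ww q)%:C.
Proof.
move=> hv; rewrite /vcoef normrM normrM normrX normCi expr1n mul1r.
apply: le_trans (ler_pM (normr_ge0 _) (normr_ge0 _) (zpow_bound q hv) (a_bound q v.1)) _.
rewrite -rC_mul rC_le.
have X0 : 0 < nrm1 nrm q by exact: nrm1_gt0 Hnrm q.
have -> : ww q = nrm1 nrm q ^+ r / nrm1 nrm q `^ s.
  rewrite /w /sg powRB; last by apply/implyP => _; rewrite gt_eqF.
  by rewrite powR_mulrn ?(ltW X0) // invf_div.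
by rewrite mulrCA.
Qed.

Lemma prod_zip_le (vs : seq (slot n d r)) (t : seq (Zd d)) :
  size vs = size t -> (forall v, v \in vs -> (mdeg v.2 <= r)%N) ->
  `|\prod_(x <- zip vs t) vcoef a x.1 x.2| <= (C ^+ size t * \prod_(q <- t) ww q)%:C.
Proof.
elim: vs t => [|v vs IH] [|q t] //= hsz hv.
  by rewrite !big_nil normr1 expr0 mulr1.
rewrite !big_cons normrM.
apply: le_trans (ler_pM (normr_ge0 _) (normr_ge0 _) (vcoef_bound q (hv v _)) (IH t _ _)) _.
- by rewrite inE eqxx.
- by case: hsz.
- by move=> u hu; apply: hv; rewrite inE hu orbT.
by rewrite -rC_mul rC_le exprS mulrACA.
Qed.

Lemma mono_bound (vs : seq (slot n d r)) k (J : {fset seq (Zd d)}) :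
  (forall v, v \in vs -> (mdeg v.2 <= r)%N) ->
  \sum_(t <- J) `|mono_fam a vs k t|
    <= ((C ^+ size vs * Kc d sg ^+ size vs) * ww k)%:C.
Proof.
move=> hv; set l := size vs.
pose F (t : seq (Zd d)) := C ^+ l * \prod_(q <- t) ww q.
have F0 : forall t, 0 <= F t.
  move=> t; rewrite /F mulr_ge0 ?exprn_ge0 ?(ltW hC) //.
  by apply: prodr_ge0 => q _; exact: w_ge0.
apply: (@le_trans _ _ (\sum_(t <- J) (if (size t == l) && (sumt t == k) then (F t)%:C else 0))).
  apply: ler_sum => t _; rewrite /mono_fam /sumt.
  case: ifP => [/andP[/eqP hsz _]|_]; last by rewrite normr0.
  have := prod_zip_le (esym hsz) hv; by rewrite /F hsz.
rewrite -big_mkcond -rC_sum rC_le.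
set H := undup (flatten J).
apply: (@le_trans _ _ (\sum_(t <- seqs H l | sumt t == k) F t)).
  rewrite -big_filter -[X in _ <= X]big_filter.
  apply: sum_sub_le => //.
  - by rewrite filter_uniq // fset_uniq.
  - by rewrite filter_uniq // seqs_uniq // undup_uniq.
  move=> t; rewrite !mem_filter => /andP[/andP[/eqP hsz hk] tJ].
  rewrite hk /= -hsz; apply: mem_seqs => x xt.
  by rewrite mem_undup; apply/flattenP; exists t.
rewrite -big_distrr /= -mulrA ler_wpM2l ?exprn_ge0 ?(ltW hC) //.
exact: (multi_conv Hnrm hd hsg l k (undup_uniq _)).
Qed.

Lemma Fc_bound (P : cpoly R n d r) (HP : order_le P) k :
  Fc_abs a P k /\ `|Fc a P k| <= (DP P * ww k)%:C.
Proof.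
have mb : forall m, m \in P -> forall J : {fset seq (Zd d)},
    \sum_(t <- J) `|mono_fam a m.2 k t|
      <= ((C ^+ size m.2 * Kc d sg ^+ size m.2) * ww k)%:C.
  by move=> m hm J; apply: mono_bound => v hvm; exact: HP m hm v hvm.
split.
  by move=> m hm; eexists; exact: mb m hm.
rewrite /Fc /DP; apply: le_trans (ler_norm_sum _ _ _) _.
rewrite mulr_suml rC_sum big_seq_cond [X in _ <= X]big_seq_cond.
apply: ler_sum => m /andP[hm _].
rewrite normrM nfcE.
apply: le_trans (ler_wpM2l _ (usum_bound (mb m hm))) _.
  by rewrite ler0c nfc_ge0.
by rewrite -rC_mul !mulrA.
Qed.

Variable N : cpoly R n d r.
Hypothesis HN : order_le N.

Lemma dN_bound k j i : `|dN a N k j i| <=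
  ((\sum_(al : mindex d r | (mdeg al <= r)%N) DP (pderiv (i, al) N))
     * nrm1 nrm j ^+ r * ww (k - j))%:C.
Proof.
rewrite /dN; apply: le_trans (ler_norm_sum _ _ _) _.
rewrite !mulr_suml rC_sum; apply: ler_sum => al hal.
rewrite !normrM normrX normCi expr1n mulr1.
have [_ hb] := Fc_bound (order_le_pderiv (v := (i, al)) HN) (k - j).
apply: le_trans (ler_pM (normr_ge0 _) (normr_ge0 _) hb (zpow_bound j hal)) _.
by rewrite -rC_mul mulrAC.
Qed.

Lemma d2N_bound k j1 j2 i1 i2 : `|d2N a N k j1 j2 i1 i2| <=
  ((\sum_(al1 : mindex d r | (mdeg al1 <= r)%N) \sum_(al2 : mindex d r | (mdeg al2 <= r)%N)
      DP (pderiv (i2, al2) (pderiv (i1, al1) N)))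
     * nrm1 nrm j1 ^+ r * nrm1 nrm j2 ^+ r * ww (k - j1 - j2))%:C.
Proof.
rewrite /d2N; apply: le_trans (ler_norm_sum _ _ _) _.
rewrite !mulr_suml rC_sum; apply: ler_sum => al1 hal1.
apply: le_trans (ler_norm_sum _ _ _) _.
rewrite !mulr_suml rC_sum; apply: ler_sum => al2 hal2.
rewrite !normrM normrX normCi expr1n mulr1.
have [_ hb] := Fc_bound (order_le_pderiv (v := (i2, al2)) (order_le_pderiv (v := (i1, al1)) HN)) (k - j1 - j2).
apply: le_trans (ler_pM (mulr_ge0 (normr_ge0 _) (normr_ge0 _)) (normr_ge0 _) _ (zpow_bound j2 hal2)) _.
  exact: ler_pM (normr_ge0 _) (normr_ge0 _) hb (zpow_bound j1 hal1).
rewrite -!rC_mul rC_le.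
have e : forall x y z t : R, x * t * y * z = x * y * z * t by move=> *; ring.
by rewrite e.
Qed.

End withA.

End mainsec.

Unset Implicit Arguments.

Lemma w_nz (R : realType) (d : nat) (nrm : Zd d -> R) sig (q : Zd d) :
  q != 0 -> w nrm sig q = (nrm q `^ sig)^-1.
Proof. by move=> q0; rewrite /w /nrm1 (negbTE q0). Qed.

Lemma le_sum_one (R : realType) (I : finType) (F : I -> R) (i : I) :
  (forall j, 0 <= F j) -> F i <= \sum_(j : I) F j.
Proof.
by move=> F0; rewrite (bigD1 i) //= lerDl sumr_ge0 // => j _; exact: F0.
Qed.

Theorem mainTheorem1 (R : realType) (d n r : nat)
  (hd : (1 <= d)%N) (hn : (1 <= n)%N)
  (nrm : Zd d -> R) (Hnrm : is_Zd_norm nrm)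
  (N : cpoly R n d r) (HN : order_le N)
  (s : R) (hs : (d + r)%:R < s) (C : R) (hC : 0 < C) :
  exists D D1 D2 : R,
  forall a : Zd d -> 'I_n -> Cpl R,
    (forall i, `|a 0 i| <= C%:C) ->
    (forall k i, k != 0 -> `|a k i| <= (C / nrm k `^ s)%:C) ->
    [/\ (* absolute convergence of the formal series *)
        (forall k, Fc_abs a N k),
        (forall k j (i : 'I_n) (al : mindex d r), (mdeg al <= r)%N ->
          Fc_abs a (pderiv (i, al) N) (k - j))
        /\ (forall k j1 j2 (i1 i2 : 'I_n) (al1 al2 : mindex d r),
          (mdeg al1 <= r)%N -> (mdeg al2 <= r)%N ->
          Fc_abs a (pderiv (i2, al2) (pderiv (i1, al1) N)) (k - j1 - j2)),
        (* estimates on N_k *)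
        (forall k, k != 0 -> `|Fc a N k| <= (D / nrm k `^ (s - r%:R))%:C)
          /\ `|Fc a N 0| <= D%:C,
        (* estimates on dN_k/da_j *)
        (forall k j i, k != j ->
           `|dN a N k j i| <= (D1 * nrm1 nrm j ^+ r / nrm (k - j) `^ (s - r%:R))%:C)
          /\ (forall k j i, k = j -> `|dN a N k j i| <= (D1 * nrm1 nrm j ^+ r)%:C)
      & (* estimates on d^2N_k/(da_j1 da_j2) *)
        (forall k j1 j2 i1 i2, k != j1 + j2 ->
           `|d2N a N k j1 j2 i1 i2|
             <= (D2 * nrm1 nrm j1 ^+ r * nrm1 nrm j2 ^+ r
                   / nrm (k - j1 - j2) `^ (s - r%:R))%:C)
          /\ (forall k j1 j2 i1 i2, k = j1 + j2 ->
           `|d2N a N k j1 j2 i1 i2| <= (D2 * nrm1 nrm j1 ^+ r * nrm1 nrm j2 ^+ r)%:C)].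
Proof.
pose D1i (i : 'I_n) := \sum_(al : mindex d r | (mdeg al <= r)%N) DP s C (pderiv (i, al) N).
pose D2i (i1 i2 : 'I_n) := \sum_(al1 : mindex d r | (mdeg al1 <= r)%N)
   \sum_(al2 : mindex d r | (mdeg al2 <= r)%N) DP s C (pderiv (i2, al2) (pderiv (i1, al1) N)).
have D1i0 : forall i, 0 <= D1i i by move=> i; apply: sumr_ge0 => al _; exact: DP_ge0 hd hs hC _.
have D2i0 : forall i1 i2, 0 <= D2i i1 i2.
  by move=> i1 i2; apply: sumr_ge0 => al1 _; apply: sumr_ge0 => al2 _; exact: DP_ge0 hd hs hC _.
exists (DP s C N), (\sum_(i : 'I_n) D1i i), (\sum_(i1 : 'I_n) \sum_(i2 : 'I_n) D2i i1 i2).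
move=> a ha0 hak.
have hsg := hsg hs.
have nrm1_ge0 : forall q, 0 <= nrm1 nrm q by move=> q; exact: ltW (nrm1_gt0 Hnrm q).
split.
- by move=> k; have [] := Fc_bound Hnrm hd hs hC ha0 hak HN k.
- split.
    move=> k j i al _.
    by have [] := Fc_bound Hnrm hd hs hC ha0 hak (order_le_pderiv (v := (i, al)) HN) (k - j).
  move=> k j1 j2 i1 i2 al1 al2 _ _.
  by have [] := Fc_bound Hnrm hd hs hC ha0 hak
      (order_le_pderiv (v := (i2, al2)) (order_le_pderiv (v := (i1, al1)) HN)) (k - j1 - j2).
- split.
    move=> k k0; have [_ hb] := Fc_bound Hnrm hd hs hC ha0 hak HN k.
    by rewrite w_nz // in hb.
  have [_ hb] := Fc_bound Hnrm hd hs hC ha0 hak HN 0.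
  by rewrite w0 mulr1 in hb.
- split.
    move=> k j i kj; apply: le_trans (dN_bound Hnrm hd hs hC ha0 hak HN k j i) _.
    rewrite w_nz ?subr_eq0 // rC_le.
    rewrite ler_wpM2r ?invr_ge0 ?powR_ge0 // ler_wpM2r ?exprn_ge0 //.
    exact: le_sum_one.
  move=> k j i ->; apply: le_trans (dN_bound Hnrm hd hs hC ha0 hak HN j j i) _.
  rewrite subrr w0 mulr1 rC_le ler_wpM2r ?exprn_ge0 //.
  exact: le_sum_one.
- split.
    move=> k j1 j2 i1 i2 kj; apply: le_trans (d2N_bound Hnrm hd hs hC ha0 hak HN k j1 j2 i1 i2) _.
    rewrite w_nz; last by rewrite -addrA -opprD subr_eq0.
    rewrite rC_le.
    rewrite ler_wpM2r ?invr_ge0 ?powR_ge0 // ler_wpM2r ?exprn_ge0 // ler_wpM2r ?exprn_ge0 //.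
    apply: le_trans (@le_sum_one _ _ _ i2 (D2i0 i1)) _.
    exact: (@le_sum_one _ _ _ i1 (fun i => sumr_ge0 _ (fun j _ => D2i0 i j))).
  move=> k j1 j2 i1 i2 ->.
  apply: le_trans (d2N_bound Hnrm hd hs hC ha0 hak HN (j1 + j2) j1 j2 i1 i2) _.
  rewrite -addrA -opprD subrr w0 mulr1 rC_le.
  rewrite ler_wpM2r ?exprn_ge0 // ler_wpM2r ?exprn_ge0 //.
  apply: le_trans (@le_sum_one _ _ _ i2 (D2i0 i1)) _.
  exact: (@le_sum_one _ _ _ i1 (fun i => sumr_ge0 _ (fun j _ => D2i0 i j))).
Qed.
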